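(* Let $H$ and $A$ be Hopf quasigroups and let $A$ be a left $H$-quasimodule Hopf quasigroup such that for all $g,h\in H$ and $a\in A$, $$h_{(1)}\otimes h_{(2)}\cdot a=h_{(2)}\otimes h_{(1)}\cdot a,\qquad g\cdot(S_H(h)\cdot a)=(gS_H(h))\cdot a.$$ Then the map $R:H\otimes A\to A\otimes H$, $R(h\otimes a)=h_{(1)}\cdot a\otimes h_{(2)}$, is a coalgebra map which is left multiplicative, normal, left conormal, right $S_H$-multiplicative and right $S_H$-conormal. Consequently $A\otimes H$ with multiplication $(a\otimes h)(b\otimes g)=a(h_{(1)}\cdot b)\otimes h_{(2)}g$, unit $1_A\otimes 1_H$, tensor product coproduct and counit, and antipode $S(a\otimes h)=R(S_H(h)\otimes S_A(a))$ is a Hopf quasigroup.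
   Context: All algebras are unital but not necessarily associative; Sweedler notation. A Hopf quasigroup is $(H,\mu_H,1_H,\Delta_H,\varepsilon_H,S_H)$ where $(H,\mu_H,1_H)$ is a unital (not necessarily associative) algebra, $(H,\Delta_H,\varepsilon_H)$ is a coassociative counital coalgebra, $\Delta_H,\varepsilon_H$ are unital algebra maps, and $S_H$ is linear with $S_H(h_{(1)})(h_{(2)}g)=\varepsilon_H(h)g=h_{(1)}(S_H(h_{(2)})g)$ and $(gh_{(1)})S_H(h_{(2)})=\varepsilon_H(h)g=(gS_H(h_{(1)}))h_{(2)}$. $A$ is a left $H$-quasimodule Hopf quasigroup if there is a linear map $H\otimes A\to A$, $h\otimes a\mapsto h\cdot a$, with $1_H\cdot a=a$, $h_{(1)}\cdot(S_H(h_{(2)})\cdot a)=\varepsilon_H(h)a=S_H(h_{(1)})\cdot(h_{(2)}\cdot a)$, $(h_{(1)}\cdot a)(h_{(2)}\cdot b)=h\cdot(ab)$, $h\cdot 1_A=\varepsilon_H(h)1_A$, $\Delta_A(h\cdot a)=h_{(1)}\cdot a_{(1)}\otimes h_{(2)}\cdot a_{(2)}$, $\varepsilon_A(h\cdot a)=\varepsilon_H(h)\varepsilon_A(a)$ for all $h\in H$, $a,b\in A$. Notation $R(h\otimes a)=\sum_R a_R\otimes h^R$; iterated $\sum_{R,r}a_{Rr}\otimes x^ry^R$ means first $R(y\otimes a)$, then $R(x\otimes a_R)$. $R$ is: a coalgebra map if $\sum_R a_{R(1)}\otimes h^R_{(1)}\otimes a_{R(2)}\otimes h^R_{(2)}=\sum_{R,r}a_{(1)R}\otimes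 h_{(1)}^R\otimes a_{(2)r}\otimes h_{(2)}^r$ and $\sum_R\varepsilon_A(a_R)\varepsilon_H(h^R)=\varepsilon_H(h)\varepsilon_A(a)$; left multiplicative if $\sum_R(ab)_R\otimes h^R=\sum_{R,r}a_Rb_r\otimes h^{Rr}$ (first $R(h\otimes a)$, then $R(h^R\otimes b)$); normal if $R(h\otimes 1_A)=1_A\otimes h$ and $R(1_H\otimes a)=a\otimes 1_H$; left conormal if $\sum_R\varepsilon_A(a_R)h^R=\varepsilon_A(a)h$; right $S_H$-multiplicative if $\sum_R a_R\otimes(gS_H(h))^R=\sum_{R,r}a_{Rr}\otimes g^rS_H(h)^R$; right $S_H$-conormal if $\sum_{R,r}a_{Rr}\varepsilon_H(S_H(h^R)^r)=\varepsilon_H(h)a$ (first $R(h\otimes a)$, then $R(S_H(h^R)\otimes a_R)$), for all $a,b\in A$, $g,h\in H$. *)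

(* Defs.v *)
(* Tensor products are not in the library: we axiomatize "a tensor product
   of U and V" by the defining data (carrier, bilinear pure-tensor map,
   spanning, universal lifting of bilinear maps); such objects exist and are
   unique up to isomorphism, and the theorem quantifies over arbitrary ones.
   Sweedler sums  sum beta(x_(1), x_(2))  of an element t of U (x) V are
   written  tev t_str beta t  (= the linear map induced by the bilinear beta). *)
From HB Require Import structures.
From mathcomp Require Import all_boot all_order all_algebra.
Set Implicit Arguments. Unset Strict Implicit. Unset Printing Implicit Defensive.
Import GRing.Theory.
Local Open Scope ring_scope.

Section Defs.
Variable K : fieldType.

Definition lin (U V : lmodType K) (f : U -> V) : Prop :=
  forall (c : K) (x y : U), f (c *: x + y) = c *: f x + f y.

Definition linK (U : lmodType K) (f : U -> K) : Prop :=
  forall (c : K) (x y : U), f (c *: x + y) = c * f x + f y.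

Definition bilin (U V W : lmodType K) (f : U -> V -> W) : Prop :=
  (forall v, lin (fun u => f u v)) /\ (forall u, lin (f u)).

Definition trilin (U V W X : lmodType K) (f : U -> V -> W -> X) : Prop :=
  [/\ forall v w, lin (fun u => f u v w),
      forall u w, lin (fun v => f u v w) &
      forall u v, lin (f u v)].

Definition quadrilin (U V W Y X : lmodType K) (f : U -> V -> W -> Y -> X) : Prop :=
  [/\ forall v w y, lin (fun u => f u v w y),
      forall u w y, lin (fun v => f u v w y),
      forall u v y, lin (fun w => f u v w y) &
      forall u v w, lin (f u v w)].

Record tensor (U V : lmodType K) := Tensor {
  tT : lmodType K;
  tm : U -> V -> tT;
  tm_bilin : bilin tm;
  tm_span : forall t : tT, exists s : seq (U * V),
      t = \sum_(p <- s) tm p.1 p.2;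
  tlift : forall W : lmodType K, (U -> V -> W) -> tT -> W;
  tlift_lin : forall (W : lmodType K) (b : U -> V -> W), bilin b -> lin (tlift b);
  tlift_tm : forall (W : lmodType K) (b : U -> V -> W), bilin b ->
      forall u v, tlift b (tm u v) = b u v
}.

Definition tev (U V : lmodType K) (T : tensor U V) (W : lmodType K)
  (b : U -> V -> W) (t : tT T) : W := @tlift U V T W b t.
Arguments tev {U V} T {W} b t.

Record hopf_quasigroup (H : lmodType K) (HH : tensor H H)
  (mul : H -> H -> H) (one : H) (cop : H -> tT HH) (eps : H -> K)
  (S : H -> H) : Prop := {
  hq_mul_bilin : bilin mul;
  hq_unitl : forall h, mul one h = h;
  hq_unitr : forall h, mul h one = h;
  hq_cop_lin : lin cop;
  hq_eps_lin : linK eps;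
  hq_S_lin : lin S;
  (* coassociativity, (cop (x) id) cop = (id (x) cop) cop, tested on all
     trilinear maps (i.e. as an equality in H (x) H (x) H) *)
  hq_coassoc : forall (W : lmodType K) (f : H -> H -> H -> W), trilin f ->
    forall h,
      tev HH (fun x y => tev HH (fun u v => f u v y) (cop x)) (cop h)
    = tev HH (fun x y => tev HH (fun u v => f x u v) (cop y)) (cop h);
  hq_counitl : forall h, tev HH (fun x y => eps x *: y) (cop h) = h;
  hq_counitr : forall h, tev HH (fun x y => eps y *: x) (cop h) = h;
  hq_cop_mul : forall g h, cop (mul g h) =
    tev HH (fun x y => tev HH (fun u v => tm HH (mul x u) (mul y v)) (cop h)) (cop g);
  hq_cop_one : cop one = tm HH one one;
  hq_eps_mul : forall g h, eps (mul g h) = eps g * eps h;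
  hq_eps_one : eps one = 1;
  hq_S1 : forall g h, tev HH (fun x y => mul (S x) (mul y g)) (cop h) = eps h *: g;
  hq_S2 : forall g h, tev HH (fun x y => mul x (mul (S y) g)) (cop h) = eps h *: g;
  hq_S3 : forall g h, tev HH (fun x y => mul (mul g x) (S y)) (cop h) = eps h *: g;
  hq_S4 : forall g h, tev HH (fun x y => mul (mul g (S x)) y) (cop h) = eps h *: g
}.

Record quasimodule_hopf_quasigroup (H A : lmodType K) (HH : tensor H H)
  (AA : tensor A A)
  (oneH : H) (copH : H -> tT HH) (epsH : H -> K) (SH : H -> H)
  (mulA : A -> A -> A) (oneA : A) (copA : A -> tT AA) (epsA : A -> K)
  (act : H -> A -> A) : Prop := {
  qm_bilin : bilin act;
  qm_one : forall a, act oneH a = a;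
  qm_S1 : forall h a, tev HH (fun x y => act x (act (SH y) a)) (copH h) = epsH h *: a;
  qm_S2 : forall h a, tev HH (fun x y => act (SH x) (act y a)) (copH h) = epsH h *: a;
  qm_mul : forall h a b,
    tev HH (fun x y => mulA (act x a) (act y b)) (copH h) = act h (mulA a b);
  qm_unit : forall h, act h oneA = epsH h *: oneA;
  qm_cop : forall h a, copA (act h a) =
    tev HH (fun x y => tev AA (fun u v => tm AA (act x u) (act y v)) (copA a)) (copH h);
  qm_eps : forall h a, epsA (act h a) = epsH h * epsA a
}.
End Defs.
Arguments tev {K U V} T {W} b t.

Section Smash.
Variable K : fieldType.
Variables H A : lmodType K.
Variables (HH : tensor H H) (AA : tensor A A) (HA : tensor H A) (AH : tensor A H).
Variables (mulH : H -> H -> H) (oneH : H) (copH : H -> tT HH) (epsH : H -> K)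
  (SH : H -> H).
Variables (mulA : A -> A -> A) (oneA : A) (copA : A -> tT AA) (epsA : A -> K)
  (SA : A -> A).
Variable act : H -> A -> A.

Section RProps.
Variable R : tT HA -> tT AH.

(* R is a coalgebra map; the first identity is an equality in
   A (x) H (x) A (x) H, tested on all 4-linear maps. *)
Definition R_coalgebra_map : Prop :=
  (forall (W : lmodType K) (f : A -> H -> A -> H -> W), quadrilin f ->
    forall (h : H) (a : A),
      tev AH (fun a' h' => tev AA (fun a1 a2 =>
                 tev HH (fun h1 h2 => f a1 h1 a2 h2) (copH h')) (copA a'))
          (R (tm HA h a))
    = tev HH (fun h1 h2 => tev AA (fun a1 a2 =>
         tev AH (fun x y => tev AH (fun x' y' => f x y x' y')
                                   (R (tm HA h2 a2)))
                (R (tm HA h1 a1))) (copA a)) (copH h))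
  /\ (forall (h : H) (a : A),
      tev AH (fun x y => (epsA x * epsH y : K^o)) (R (tm HA h a))
      = epsH h * epsA a).

Definition R_left_multiplicative : Prop :=
  forall (h : H) (a b : A),
    R (tm HA h (mulA a b)) =
    tev AH (fun x y => tev AH (fun u v => tm AH (mulA x u) v) (R (tm HA y b)))
        (R (tm HA h a)).

Definition R_normal : Prop :=
  (forall h : H, R (tm HA h oneA) = tm AH oneA h) /\
  (forall a : A, R (tm HA oneH a) = tm AH a oneH).

Definition R_left_conormal : Prop :=
  forall (h : H) (a : A),
    tev AH (fun x y => epsA x *: y) (R (tm HA h a)) = epsA a *: h.

Definition R_right_S_multiplicative : Prop :=
  forall (g h : H) (a : A),
    R (tm HA (mulH g (SH h)) a) =
    tev AH (fun x y => tev AH (fun u v => tm AH u (mulH v y)) (R (tm HA g x)))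
        (R (tm HA (SH h) a)).

Definition R_right_S_conormal : Prop :=
  forall (h : H) (a : A),
    tev AH (fun x y => tev AH (fun u v => epsH v *: u) (R (tm HA (SH y) x)))
        (R (tm HA h a))
    = epsH h *: a.
End RProps.

Definition Rmap : tT HA -> tT AH :=
  tev HA (fun h a => tev HH (fun x y => tm AH (act x a) y) (copH h)).

Definition smash_mul (s t : tT AH) : tT AH :=
  tev AH (fun a h => tev AH (fun b g =>
     tev HH (fun h1 h2 => tm AH (mulA a (act h1 b)) (mulH h2 g)) (copH h)) t) s.

Definition smash_one : tT AH := tm AH oneA oneH.

Definition smash_cop (XX : tensor (tT AH) (tT AH)) (s : tT AH) : tT XX :=
  tev AH (fun a h => tev AA (fun a1 a2 =>
     tev HH (fun h1 h2 => tm XX (tm AH a1 h1) (tm AH a2 h2)) (copH h))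
     (copA a)) s.

Definition smash_eps (s : tT AH) : K :=
  tev AH (fun a h => (epsA a * epsH h : K^o)) s.

Definition smash_S (s : tT AH) : tT AH :=
  tev AH (fun a h => Rmap (tm HA (SH h) (SA a))) s.
End Smash.

(* Main.v *)
Require Import Defs.
From HB Require Import structures.
From mathcomp Require Import all_boot all_order all_algebra.
From Stdlib Require Import FunctionalExtensionality.
Import GRing.Theory.
Local Open Scope ring_scope.

Set Implicit Arguments. Unset Strict Implicit. Unset Printing Implicit Defensive.

Section Base.
Variable K : fieldType.

Lemma lin_add0 (U V : lmodType K) (f : U -> V) : lin f -> forall x y, f (x + y) = f x + f y.
Proof. by move=> L x y; have := L 1 x y; rewrite !scale1r. Qed.

Lemma lin_0 (U V : lmodType K) (f : U -> V) : lin f -> f 0 = 0.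
Proof.
move=> L; have := lin_add0 L 0 0; rewrite addr0 => /eqP.
by rewrite -subr_eq0 opprD addrA subrr sub0r oppr_eq0 => /eqP.
Qed.

Lemma lin_Z (U V : lmodType K) (f : U -> V) c x : lin f -> f (c *: x) = c *: f x.
Proof. by move=> L; have := L c x 0; rewrite !addr0 lin_0 // addr0. Qed.

Lemma lin_sum (U V : lmodType K) (f : U -> V) (I : Type) (s : seq I) (F : I -> U) :
  lin f -> f (\sum_(i <- s) F i) = \sum_(i <- s) f (F i).
Proof.
move=> L; elim: s => [|i s IH]; first by rewrite !big_nil lin_0.
by rewrite !big_cons lin_add0 // IH.
Qed.

Lemma lin_id (U : lmodType K) : lin (fun x : U => x).
Proof. by []. Qed.

Lemma lin_comp (U V W : lmodType K) (f : V -> W) (g : U -> V) :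
  lin f -> lin g -> lin (fun x => f (g x)).
Proof. by move=> Lf Lg c x y; rewrite Lg Lf. Qed.

Lemma lin_addf (U V : lmodType K) (f g : U -> V) :
  lin f -> lin g -> lin (fun x => f x + g x).
Proof.
move=> Lf Lg c x y; rewrite Lf Lg scalerDr.
by rewrite -!addrA; congr (_ + _); rewrite addrCA.
Qed.

Lemma lin_zero (U V : lmodType K) : lin (fun _ : U => (0 : V)).
Proof. by move=> c x y; rewrite scaler0 addr0. Qed.

Lemma lin_scale (V : lmodType K) (c : K) : lin (fun v : V => c *: v).
Proof. by move=> d x y; rewrite scalerDr !scalerA mulrC. Qed.

Lemma lin_scalel (U V : lmodType K) (e : U -> K) (v : V) :
  linK e -> lin (fun x => e x *: v).
Proof. by move=> Le c x y; rewrite Le scalerDl scalerA. Qed.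

Lemma linK_lin (U : lmodType K) (e : U -> K) : linK e -> lin (e : U -> K^o).
Proof. by []. Qed.

Lemma lin_compK (U V : lmodType K) (e : V -> K) (g : U -> V) :
  linK e -> lin g -> lin (fun x => (e (g x) : K^o)).
Proof. by move=> Le Lg c x y; rewrite Lg Le. Qed.

Lemma lin_mulKl (U V : lmodType K) (e : V -> K) (g : U -> V) (c : K) :
  linK e -> lin g -> lin (fun x => (e (g x) * c : K^o)).
Proof. by move=> Le Lg d x y; rewrite Lg Le mulrDl -mulrA. Qed.

Lemma lin_mulKr (U V : lmodType K) (e : V -> K) (g : U -> V) (c : K) :
  linK e -> lin g -> lin (fun x => (c * e (g x) : K^o)).
Proof. by move=> Le Lg d x y; rewrite Lg Le mulrDr mulrCA. Qed.

Lemma lin_linK (U : lmodType K) (e : U -> K) : lin (e : U -> K^o) -> linK e.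
Proof. by []. Qed.

Section Tens.
Variables (U V : lmodType K) (T : tensor U V).

Lemma tm_linl v : lin (fun u => tm T u v).
Proof. exact: (tm_bilin T).1. Qed.
Lemma tm_linr u : lin (tm T u).
Proof. exact: (tm_bilin T).2. Qed.

Lemma tev_tm (W : lmodType K) (b : U -> V -> W) u v :
  bilin b -> tev T b (tm T u v) = b u v.
Proof. by move=> Hb; rewrite /tev (tlift_tm T Hb). Qed.

Lemma tev_lin (W : lmodType K) (b : U -> V -> W) : bilin b -> lin (tev T b).
Proof. by move=> Hb; exact (@tlift_lin _ _ _ T _ _ Hb). Qed.

Lemma tensor_ext (W : lmodType K) (F G : tT T -> W) :
  lin F -> lin G -> (forall u v, F (tm T u v) = G (tm T u v)) -> forall t, F t = G t.
Proof.
move=> LF LG E t; have [s ->] := tm_span t.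
by rewrite !lin_sum //; apply: eq_bigr => p _.
Qed.

Lemma tev_comp (W W' : lmodType K) (L : W -> W') (b : U -> V -> W) t :
  lin L -> bilin b -> bilin (fun x y => L (b x y)) ->
  L (tev T b t) = tev T (fun x y => L (b x y)) t.
Proof.
move=> LL Lb Lb'; apply: (tensor_ext (F := fun t => L (tev T b t))) => //.
- exact: lin_comp (tev_lin Lb).
- exact: tev_lin.
- by move=> u v; rewrite !tev_tm.
Qed.

Lemma tev_tm_id t : tev T (tm T) t = t.
Proof.
apply: (tensor_ext (F := tev T (tm T)) (G := id)) => //.
- exact: tev_lin (tm_bilin T).
- by move=> u v; rewrite tev_tm //; exact: tm_bilin.
Qed.

Lemma lin_tev_b (X W : lmodType K) (G : X -> U -> V -> W) t :
  (forall x, bilin (G x)) -> (forall u v, lin (fun x => G x u v)) ->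
  lin (fun x => tev T (G x) t).
Proof.
move=> B L; have [s ->] := tm_span t.
have E : forall x, tev T (G x) (\sum_(p <- s) tm T p.1 p.2) = \sum_(p <- s) G x p.1 p.2.
  by move=> x; rewrite lin_sum; [apply: eq_bigr => p _; rewrite tev_tm | apply: tev_lin].
move=> c x y; rewrite !E; elim: s {E} => [|p s IH]; first by rewrite !big_nil scaler0 addr0.
rewrite !big_cons IH L scalerDr -!addrA; congr (_ + _); by rewrite addrCA.
Qed.

End Tens.
End Base.

Ltac closed t := let _ := type of t in idtac.

Ltac close_lin :=
  first
  [ exact: lin_id
  | exact: lin_scale
  | exact: tm_linl
  | exact: tm_linr
  | (apply: tev_lin; ml_tac)
  | match goal with H : _ |- _ => solve [eapply H] end
  | (apply: lin_scalel; match goal with H : _ |- _ => solve [eapply H] end)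
  | (apply: linK_lin; match goal with H : _ |- _ => solve [eapply H] end) ]
with lin_tac :=
  cbv beta;
  match goal with
  | |- lin (fun x => x) => exact: lin_id
  | |- lin (fun x => @?f x + @?g x) => apply: (lin_addf (f:=f) (g:=g)); lin_tac
  | |- lin (fun x => @tev _ _ _ ?T _ ?b (@?g x)) =>
       closed b; 
       apply: (lin_comp (f := tev T b) (g := g)); [apply: tev_lin; ml_tac | lin_tac]
  | |- lin (fun x => @tev _ _ _ ?T _ (@?G x) ?t) =>
       closed t;
       apply: (lin_tev_b (G := G)); [intro; ml_tac | intros; lin_tac]
  | |- lin (fun x => ?e (@?g x) * ?c) => closed e; closed c;
       apply: (lin_mulKl (e := e) (g := g)); [match goal with H : _ |- _ => solve [eapply H] end | lin_tac]
  | |- lin (fun x => ?c * ?e (@?g x)) => closed e; closed c;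
       apply: (lin_mulKr (e := e) (g := g)); [match goal with H : _ |- _ => solve [eapply H] end | lin_tac]
  | |- lin (fun x => ?e (@?g x) *: ?v) =>
       closed e; closed v;
       apply: (lin_comp (f := fun z => e z *: v) (g := g)); [close_lin | lin_tac]
  | |- lin (fun x => ?F (@?g x)) => closed F;
       apply: (lin_compK (e := F) (g := g)); [match goal with H : _ |- _ => solve [eapply H] end | lin_tac]
  | |- lin (fun x => ?F (@?g x)) => closed F;
       apply: (lin_comp (f := F) (g := g)); [close_lin | lin_tac]
  | |- lin (fun x => ?F (@?g x) ?y) => closed F; closed y;
       apply: (lin_comp (f := fun z => F z y) (g := g)); [close_lin | lin_tac]
  | |- lin (fun x => ?F (@?g x) ?y ?z) => closed F; closed y; closed z;
       apply: (lin_comp (f := fun w => F w y z) (g := g)); [close_lin | lin_tac]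
  | |- lin (fun x => ?F (@?g x) ?y ?z ?w) => closed F; closed y; closed z; closed w;
       apply: (lin_comp (f := fun v => F v y z w) (g := g)); [close_lin | lin_tac]
  | |- lin _ => close_lin
  end
with ml_tac :=
  cbv beta;
  lazymatch goal with
  | |- bilin _ => split; intros; lin_tac
  | |- trilin _ => split; intros; lin_tac
  | |- quadrilin _ => split; intros; lin_tac
  | |- lin _ => lin_tac
  end.

Section Base2.
Variable K : fieldType.
Lemma tev_ext (U V W : lmodType K) (T : tensor U V) (b1 b2 : U -> V -> W) t :
  (forall x y, b1 x y = b2 x y) -> tev T b1 t = tev T b2 t.
Proof.
move=> E; have -> // : b1 = b2.
by apply: functional_extensionality => x; apply: functional_extensionality => y.
Qed.

Lemma tev_swap (U1 V1 U2 V2 W : lmodType K) (T1 : tensor U1 V1) (T2 : tensor U2 V2)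
  (F : U1 -> V1 -> U2 -> V2 -> W) t1 t2 :
  quadrilin F ->
  tev T1 (fun x y => tev T2 (fun u v => F x y u v) t2) t1 =
  tev T2 (fun u v => tev T1 (fun x y => F x y u v) t1) t2.
Proof.
case=> F1 F2 F3 F4.
apply: (tensor_ext (F := fun t1 => tev T1 (fun x y => tev T2 (fun u v => F x y u v) t2) t1)
                   (G := fun t1 => tev T2 (fun u v => tev T1 (fun x y => F x y u v) t1) t2)).
- lin_tac.
- lin_tac.
- move=> a b; rewrite tev_tm; last by ml_tac.
  apply: tev_ext => u v; rewrite tev_tm //; ml_tac.
Qed.
End Base2.
Ltac pg := match goal with |- ?G => idtac G end.
Section Base3.
Variable K : fieldType.
Lemma tev_tev (U1 V1 U2 V2 W : lmodType K) (T1 : tensor U1 V1) (T2 : tensor U2 V2)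
  (b1 : U1 -> V1 -> W) (b2 : U2 -> V2 -> tT T1) t :
  bilin b1 -> bilin b2 ->
  tev T1 b1 (tev T2 b2 t) = tev T2 (fun x y => tev T1 b1 (b2 x y)) t.
Proof. move=> B1 B2; apply: tev_comp => //; [exact: tev_lin | ml_tac]. Qed.
End Base3.
Section Base4.
Variable K : fieldType.
Lemma bilin_comp (U V W W' : lmodType K) (L : W -> W') (b : U -> V -> W) :
  lin L -> bilin b -> bilin (fun x y => L (b x y)).
Proof. move=> LL [B1 B2]; split=> [v|u]; exact: lin_comp. Qed.

Lemma tev_pull (U V W W' : lmodType K) (T : tensor U V) (L : W -> W') (b : U -> V -> W) t :
  lin L -> bilin b -> tev T (fun x y => L (b x y)) t = L (tev T b t).
Proof. move=> LL Lb; rewrite tev_comp //; exact: bilin_comp. Qed.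
End Base4.
Section Base5.
Variable K : fieldType.
Lemma tev_pull' (U V W W' : lmodType K) (T : tensor U V) (L : W -> W') (b : U -> V -> W)
  (F : U -> V -> W') t :
  lin L -> bilin b -> (forall x y, F x y = L (b x y)) -> tev T F t = L (tev T b t).
Proof. by move=> LL Lb E; rewrite (tev_ext _ E) tev_pull. Qed.
End Base5.
Tactic Notation "pull" constr(L) constr(b) :=
  rewrite (tev_pull' (L:=L) (b:=b)); try solve [ ml_tac | move=> ??; reflexivity ].
Tactic Notation "pull" constr(L) constr(b) "in" hyp(H) :=
  rewrite (tev_pull' (L:=L) (b:=b)) in H; try solve [ ml_tac | move=> ??; reflexivity ].
Tactic Notation "push" constr(L) constr(b) :=
  rewrite (tev_comp (L:=L) (b:=b)); [cbv beta | try solve [ ml_tac ] ..].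
Ltac ttev := rewrite tev_tev; [|by ml_tac|by ml_tac].
Ltac ttm := rewrite tev_tm; [|by ml_tac].

Section Coalg.
Variable K : fieldType.
Variables (C : lmodType K) (CC : tensor C C) (cop : C -> tT CC) (eps : C -> K).
Hypothesis cop_lin : lin cop.
Hypothesis eps_lin : linK eps.
Hypothesis coassoc : forall (W : lmodType K) (f : C -> C -> C -> W), trilin f ->
    forall h,
      tev CC (fun x y => tev CC (fun u v => f u v y) (cop x)) (cop h)
    = tev CC (fun x y => tev CC (fun u v => f x u v) (cop y)) (cop h).
Hypothesis counitl : forall h, tev CC (fun x y => eps x *: y) (cop h) = h.
Hypothesis counitr : forall h, tev CC (fun x y => eps y *: x) (cop h) = h.

Local Notation D2 h f := (tev CC f (cop h)).

Lemma cu_l (W : lmodType K) (g : C -> W) h : lin g ->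
  D2 h (fun x y => eps x *: g y) = g h.
Proof.
move=> Lg; rewrite -{2}(counitl h) (tev_comp (L := g)) //; try ml_tac.
by apply: tev_ext => x y; rewrite lin_Z.
Qed.

Lemma cu_r (W : lmodType K) (g : C -> W) h : lin g ->
  D2 h (fun x y => eps y *: g x) = g h.
Proof.
move=> Lg; rewrite -{2}(counitr h) (tev_comp (L := g)) //; try ml_tac.
by apply: tev_ext => x y; rewrite lin_Z.
Qed.

Section Four.
Variables (W : lmodType K) (f : C -> C -> C -> C -> W).
Hypothesis fL : quadrilin f.

Lemma c12 h :
  D2 h (fun x y => D2 x (fun p q => D2 p (fun u v => f u v q y))) =
  D2 h (fun x y => D2 x (fun p q => D2 q (fun u v => f p u v y))).
Proof.
case: fL => f1 f2 f3 f4.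
apply: tev_ext => x y; apply: (coassoc (f := fun u v q => f u v q y)); ml_tac.
Qed.

Lemma c13' h :
  D2 h (fun x y => D2 x (fun p q => D2 p (fun u v => f u v q y))) =
  D2 h (fun x y => D2 y (fun c d => D2 x (fun a b => f a b c d))).
Proof.
case: fL => f1 f2 f3 f4.
apply: (coassoc (f := fun p q y => D2 p (fun u v => f u v q y))); ml_tac.
Qed.

Lemma c33 h :
  D2 h (fun x y => D2 x (fun a b => D2 y (fun c d => f a b c d))) =
  D2 h (fun x y => D2 y (fun c d => D2 x (fun a b => f a b c d))).
Proof.
case: fL => f1 f2 f3 f4.
apply: tev_ext => x y; apply: tev_swap; ml_tac.
Qed.

Lemma c13 h :
  D2 h (fun x y => D2 x (fun p q => D2 p (fun u v => f u v q y))) =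
  D2 h (fun x y => D2 x (fun a b => D2 y (fun c d => f a b c d))).
Proof. by rewrite c13' c33. Qed.

Lemma c14 h :
  D2 h (fun x y => D2 x (fun p q => D2 p (fun u v => f u v q y))) =
  D2 h (fun x y => D2 y (fun p q => D2 p (fun u v => f x u v q))).
Proof.
case: fL => f1 f2 f3 f4.
rewrite c12; apply: (coassoc (f := fun x p q => D2 p (fun u v => f x u v q))); ml_tac.
Qed.

Lemma c15 h :
  D2 h (fun x y => D2 x (fun p q => D2 p (fun u v => f u v q y))) =
  D2 h (fun x y => D2 y (fun p q => D2 q (fun u v => f x p u v))).
Proof.
case: fL => f1 f2 f3 f4.
rewrite c13; apply: (coassoc (f := fun x p q => D2 q (fun u v => f x p u v))); ml_tac.
Qed.
End Four.
End Coalg.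

Section HQ.
Variable K : fieldType.
Variables (H : lmodType K) (HH : tensor H H).
Variables (mul : H -> H -> H) (one : H) (cop : H -> tT HH) (eps : H -> K) (S : H -> H).
Hypothesis hq : hopf_quasigroup mul one cop eps S.

Local Notation D2 h f := (tev HH f (cop h)).

Let mulL : forall y, lin (fun x => mul x y). Proof. exact: (hq_mul_bilin hq).1. Qed.
Let mulR : forall x, lin (mul x). Proof. exact: (hq_mul_bilin hq).2. Qed.
Let copL : lin cop. Proof. exact: hq_cop_lin hq. Qed.
Let epsL : linK eps. Proof. exact: hq_eps_lin hq. Qed.
Let SL : lin S. Proof. exact: hq_S_lin hq. Qed.
Let coassoc := hq_coassoc hq.
Let c12H := c12 coassoc.
Let c13'H := c13' copL coassoc.
Let c13H := c13 copL coassoc.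
Let c14H := c14 copL coassoc.
Let c15H := c15 copL coassoc.
Let c33H := c33 cop.
Let cu_lH := cu_l epsL (hq_counitl hq).
Let cu_rH := cu_r epsL (hq_counitr hq).
Let counitl := hq_counitl hq.
Let counitr := hq_counitr hq.

Lemma aux_anti (t : tT HH) k :
  eps k *: t = D2 k (fun k' r => D2 r (fun k3 k4 =>
     tev HH (fun p q => tm HH (mul p (S k4)) (mul q (S k3)))
       (tev HH (fun x' y' => tev HH (fun u v => tm HH (mul x' u) (mul y' v)) (cop k')) t))).
Proof.
move: t; apply: tensor_ext.
- exact: lin_scale.
- lin_tac.
move=> a b.
under tev_ext => k' r do under tev_ext => k3 k4 do (rewrite tev_tm; last by ml_tac).
under tev_ext => k' r do under tev_ext => k3 k4 do (rewrite tev_tev; [|by ml_tac|by ml_tac]; under tev_ext => u v do (rewrite tev_tm; last by ml_tac)).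
rewrite -(c13'H (f := fun u v k3 k4 => tm HH (mul (mul a u) (S k4)) (mul (mul b v) (S k3)))); last by ml_tac.
rewrite c12H; last by ml_tac.
under tev_ext => x y do under tev_ext => p q do
  (rewrite (tev_pull (L := tm HH (mul (mul a p) (S y))) (b := fun v k3 => mul (mul b v) (S k3))); [|by ml_tac|by ml_tac]; rewrite (hq_S3 hq)).
under tev_ext => x y do (under tev_ext => p q do rewrite (lin_Z _ _ (tm_linr _ _));
  rewrite (cu_rH (g := fun p => tm HH (mul (mul a p) (S y)) b)); last by lin_tac).
rewrite (tev_pull (L := fun z => tm HH z b) (b := fun x y => mul (mul a x) (S y))); [|by ml_tac|by ml_tac].
by rewrite (hq_S3 hq) (lin_Z _ _ (tm_linl _ _)).
Qed.


Lemma S_one h : D2 h (fun x y => mul (S x) y) = eps h *: one.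
Proof. rewrite -(hq_S1 hq one h); apply: tev_ext => x y; by rewrite (hq_unitr hq). Qed.

Lemma cop_S h : cop (S h) = D2 h (fun x y => tm HH (S y) (S x)).
Proof.
rewrite -(cu_rH (g := fun x => cop (S x)) h); last by lin_tac.
under tev_ext => x y do rewrite aux_anti.
under tev_ext => x y do under tev_ext => k' r do under tev_ext => k3 k4 do rewrite -(hq_cop_mul hq).
rewrite -(c15H (f := fun x k' k3 k4 => D2 (mul (S x) k') (fun p q : H => tm HH (mul p (S k4)) (mul q (S k3))))); last by ml_tac.
under tev_ext => x y do under tev_ext => p q do
  (rewrite (tev_pull (L := fun z => D2 z (fun p0 q0 : H => tm HH (mul p0 (S y)) (mul q0 (S q)))) (b := fun u v => mul (S u) v)); [|by ml_tac|by ml_tac];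
   rewrite S_one (lin_Z _ _ (_ : lin (fun z => D2 z (fun p0 q0 : H => tm HH (mul p0 (S y)) (mul q0 (S q)))))); last by lin_tac).
apply: tev_ext => x y.
rewrite (cu_lH (g := fun q => D2 one (fun p0 q0 : H => tm HH (mul p0 (S y)) (mul q0 (S q))))); last by lin_tac.
by rewrite (hq_cop_one hq) tev_tm ?(hq_unitl hq) //; ml_tac.
Qed.

Lemma eps_S h : eps (S h) = eps h.
Proof.
have E1 : eps h = eps (eps h *: one) by rewrite (lin_Z _ _ (linK_lin epsL)) (hq_eps_one hq); rewrite /GRing.scale /= mulr1.
rewrite E1 -S_one (tev_comp (L := (eps : H -> K^o))); try by ml_tac.
under tev_ext => x y do rewrite (hq_eps_mul hq) mulrC.
rewrite -[LHS](cu_rH (g := fun x => (eps (S x) : K^o))) //; by lin_tac.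
Qed.
Lemma eps_cop h : D2 h (fun x y => (eps x * eps y : K^o)) = eps h.
Proof.
rewrite -{2}(hq_counitl hq h) (tev_comp (L := (eps : H -> K^o))); try by ml_tac.
by apply: tev_ext => x y; rewrite (lin_Z _ _ (linK_lin epsL)).
Qed.
Lemma S_one3 h : D2 h (fun x y => mul x (S y)) = eps h *: one.
Proof. rewrite -(hq_S3 hq one h); apply: tev_ext => x y; by rewrite (hq_unitl hq). Qed.
End HQ.

Section Main.
Variable K : fieldType.
Variables (H A : lmodType K)
  (HH : tensor H H) (AA : tensor A A) (HA : tensor H A) (AH : tensor A H)
  (XX : tensor (tT AH) (tT AH))
  (mulH : H -> H -> H) (oneH : H) (copH : H -> tT HH) (epsH : H -> K)
  (SH : H -> H)
  (mulA : A -> A -> A) (oneA : A) (copA : A -> tT AA) (epsA : A -> K)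
  (SA : A -> A)
  (act : H -> A -> A).
Hypothesis hH : hopf_quasigroup mulH oneH copH epsH SH.
Hypothesis hA : hopf_quasigroup mulA oneA copA epsA SA.
Hypothesis qm : quasimodule_hopf_quasigroup oneH copH epsH SH mulA oneA copA epsA act.
Hypothesis swap : forall (h : H) (a : A),
     tev HH (fun x y => tm HA x (act y a)) (copH h)
     = tev HH (fun x y => tm HA y (act x a)) (copH h).
Hypothesis hyp2 : forall (g h : H) (a : A), act g (act (SH h) a) = act (mulH g (SH h)) a.

Let mulHL : forall y, lin (fun x => mulH x y). Proof. exact: (hq_mul_bilin hH).1. Qed.
Let mulHR : forall x, lin (mulH x). Proof. exact: (hq_mul_bilin hH).2. Qed.
Let copHL : lin copH. Proof. exact: hq_cop_lin hH. Qed.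
Let epsHL : linK epsH. Proof. exact: hq_eps_lin hH. Qed.
Let SHL : lin SH. Proof. exact: hq_S_lin hH. Qed.
Let mulAL : forall y, lin (fun x => mulA x y). Proof. exact: (hq_mul_bilin hA).1. Qed.
Let mulAR : forall x, lin (mulA x). Proof. exact: (hq_mul_bilin hA).2. Qed.
Let copAL : lin copA. Proof. exact: hq_cop_lin hA. Qed.
Let epsAL : linK epsA. Proof. exact: hq_eps_lin hA. Qed.
Let SAL : lin SA. Proof. exact: hq_S_lin hA. Qed.
Let actL : forall a, lin (fun h => act h a). Proof. exact: (qm_bilin qm).1. Qed.
Let actR : forall h, lin (act h). Proof. exact: (qm_bilin qm).2. Qed.

Let coH := hq_coassoc hH.
Let coA := hq_coassoc hA.
Let cuHl := cu_l epsHL (hq_counitl hH).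
Let cuHr := cu_r epsHL (hq_counitr hH).
Let cuAl := cu_l epsAL (hq_counitl hA).
Let cuAr := cu_r epsAL (hq_counitr hA).

Let c12H := c12 coH.
Let c13H := c13 copHL coH.
Let c13'H := c13' copHL coH.
Let c14H := c14 copHL coH.
Let c15H := c15 copHL coH.
Let c33H := c33 copH.
Let c12A := c12 coA.
Let c13A := c13 copAL coA.
Let c13'A := c13' copAL coA.
Let c14A := c14 copAL coA.
Let c15A := c15 copAL coA.
Let c33A := c33 copA.

Local Notation R := (@Rmap K H A HH HA AH copH act).

Lemma R_tm h a : R (tm HA h a) = tev HH (fun x y => tm AH (act x a) y) (copH h).
Proof. by rewrite /Rmap tev_tm //; ml_tac. Qed.

Lemma P_normal : @R_normal K H A HA AH oneH oneA R.
Proof.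
split=> [h|a]; rewrite R_tm.
- under tev_ext => x y do rewrite (qm_unit qm) (lin_Z _ _ (tm_linl AH y)).
  by rewrite cuHl //; lin_tac.
- by rewrite (hq_cop_one hH) tev_tm ?(qm_one qm) //; ml_tac.
Qed.

Lemma P_conormal : @R_left_conormal K H A HA AH epsA R.
Proof.
move=> h a; rewrite R_tm tev_tev; try by ml_tac.
under tev_ext => x y do (rewrite tev_tm; [rewrite (qm_eps qm) mulrC -scalerA|by ml_tac]).
pull (fun z : H => epsA a *: z) (fun x y : H => epsH x *: y).
by rewrite (hq_counitl hH).
Qed.



Lemma P_leftmult : @R_left_multiplicative K H A HA AH mulA R.
Proof.
move=> h a b; rewrite !R_tm tev_tev; try by ml_tac.
under [RHS]tev_ext => x y do (rewrite tev_tm; [rewrite R_tm tev_tev; [|by ml_tac|by ml_tac] | by ml_tac];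
  under tev_ext => p q do (rewrite tev_tm; [|by ml_tac])).
rewrite -coH; last by ml_tac.
apply: tev_ext => x y.
pull (fun z => tm AH z y) (fun u v => mulA (act u a) (act v b)).
by rewrite (qm_mul qm).
Qed.

Lemma P_Sconormal : @R_right_S_conormal K H A HA AH epsH SH R.
Proof.
move=> h a; rewrite R_tm tev_tev; try by ml_tac.
under tev_ext => x y do (rewrite tev_tm; [|by ml_tac]; rewrite R_tm tev_tev; [|by ml_tac|by ml_tac];
  under tev_ext => p q do (rewrite tev_tm; [|by ml_tac]);
  rewrite (cuHr (g := fun p => act p (act x a))); [|by lin_tac]).
have E := f_equal (tev HA (fun x c => act (SH x) c)) (swap h a).
rewrite !tev_tev in E; try by ml_tac.
transitivity (tev HH (fun x y => tev HA (fun x c => act (SH x) c) (tm HA y (act x a))) (copH h)).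
  by apply: tev_ext => x y; rewrite tev_tm //; ml_tac.
rewrite -E -(qm_S2 qm); apply: tev_ext => x y; rewrite tev_tm //; ml_tac.
Qed.

Lemma P_Smult : @R_right_S_multiplicative K H A HA AH mulH SH R.
Proof.
move=> g h a; rewrite !R_tm (hq_cop_mul hH) !tev_tev; try by ml_tac.
under tev_ext => x y do (rewrite tev_tev; [|by ml_tac|by ml_tac];
  under tev_ext => u v do (rewrite tev_tm; [|by ml_tac]);
  rewrite (cop_S hH) tev_tev; [|by ml_tac|by ml_tac];
  under tev_ext => p q do (rewrite tev_tm; [|by ml_tac])).
rewrite [in RHS](cop_S hH) [RHS]tev_tev; try by ml_tac.
under [RHS]tev_ext => p q do (rewrite tev_tm; [|by ml_tac]).
under [RHS]tev_ext => p q do (rewrite tev_tm; [|by ml_tac]; rewrite R_tm tev_tev; [|by ml_tac|by ml_tac];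
  under tev_ext => x y do (rewrite tev_tm; [|by ml_tac]; rewrite hyp2)).
rewrite tev_swap //; ml_tac.
Qed.

Lemma swap_gen (W : lmodType K) (Phi : H -> A -> W) m v : bilin Phi ->
  tev HH (fun q r => Phi q (act r v)) (copH m) = tev HH (fun q r => Phi r (act q v)) (copH m).
Proof.
move=> [P1 P2].
have E := f_equal (tev HA Phi) (swap m v).
rewrite !tev_tev in E; try by ml_tac.
transitivity (tev HH (fun x y => tev HA Phi (tm HA x (act y v))) (copH m)).
  by apply: tev_ext => x y; rewrite tev_tm //; ml_tac.
rewrite E; apply: tev_ext => x y; rewrite tev_tm //; ml_tac.
Qed.

Lemma P_coalg : @R_coalgebra_map K H A HH AA HA AH copH epsH copA epsA R.
Proof.
split; last first.
  move=> h a; rewrite R_tm tev_tev; try by ml_tac.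
  under tev_ext => x y do (rewrite tev_tm; [|by ml_tac]; rewrite (qm_eps qm) mulrAC mulrC).
  pull (fun z : K^o => epsA a *: z) (fun x y => (epsH x * epsH y : K^o)).
  by rewrite (eps_cop hH) /= mulrC.
move=> W f [f1 f2 f3 f4] h a.
rewrite R_tm tev_tev; try by ml_tac.
under tev_ext => x y do (rewrite tev_tm; [|by ml_tac]; rewrite (qm_cop qm) tev_tev; [|by ml_tac|by ml_tac];
  under tev_ext => p q do (rewrite tev_tev; [|by ml_tac|by ml_tac]; under tev_ext => u v do (rewrite tev_tm; [|by ml_tac]);
   rewrite tev_swap; [|by ml_tac])).
under [RHS]tev_ext => h1 h2 do (under tev_ext => a1 a2 do (rewrite !R_tm tev_tev; [|by ml_tac|by ml_tac];
   under tev_ext => k1 k2 do (rewrite tev_tm; [|by ml_tac]; rewrite tev_tev; [|by ml_tac|by ml_tac];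
      under tev_ext => m1 m2 do (rewrite tev_tm; [|by ml_tac])));
   rewrite tev_swap; [|by ml_tac];
   under tev_ext => k1 k2 do (rewrite tev_swap; [|by ml_tac])).
rewrite -[LHS]c13H; last by ml_tac.
rewrite -[RHS]c13H; last by ml_tac.
rewrite [LHS]c12H; last by ml_tac.
rewrite [RHS]c12H; last by ml_tac.
apply: tev_ext => x y; apply: tev_ext => p m.
rewrite tev_swap; last by ml_tac.
rewrite [RHS]tev_swap; last by ml_tac.
apply: tev_ext => u v.
by rewrite (swap_gen (Phi := fun z c => f (act p u) z c y)) //; ml_tac.
Qed.
Local Notation sm := (@smash_mul K H A HH AH mulH copH mulA act).
Local Notation sone := (@smash_one K H A AH oneH oneA).
Local Notation scop := (@smash_cop K H A HH AA AH copH copA XX).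
Local Notation seps := (@smash_eps K H A AH epsH epsA).
Local Notation sS := (@smash_S K H A HH HA AH copH SH SA act).

Lemma smL : forall t, lin (fun s => sm s t).
Proof. move=> t; rewrite /smash_mul; lin_tac. Qed.
Lemma smR : forall s, lin (sm s).
Proof. move=> s; rewrite /smash_mul; lin_tac. Qed.
Lemma scopL : lin scop.
Proof. rewrite /smash_cop; lin_tac. Qed.
Lemma sepsL : linK seps.
Proof. rewrite /smash_eps; apply: lin_linK; apply: tev_lin; ml_tac. Qed.
Lemma sSL : lin sS.
Proof. rewrite /smash_S /Rmap; lin_tac. Qed.

Lemma sm_tm a h b g : sm (tm AH a h) (tm AH b g) =
  tev HH (fun h1 h2 => tm AH (mulA a (act h1 b)) (mulH h2 g)) (copH h).
Proof. by rewrite /smash_mul !tev_tm //; ml_tac. Qed.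

Lemma scop_tm a h : scop (tm AH a h) =
  tev AA (fun a1 a2 => tev HH (fun h1 h2 => tm XX (tm AH a1 h1) (tm AH a2 h2)) (copH h)) (copA a).
Proof. by rewrite /smash_cop !tev_tm //; ml_tac. Qed.

Lemma seps_tm a h : seps (tm AH a h) = epsA a * epsH h.
Proof. by rewrite /smash_eps !tev_tm //; ml_tac. Qed.

Lemma sS_tm a h : sS (tm AH a h) =
  tev HH (fun p q => tm AH (act (SH q) (SA a)) (SH p)) (copH h).
Proof.
rewrite /smash_S tev_tm; last by rewrite -/R; ml_tac.
rewrite R_tm (cop_S hH) tev_tev; try by ml_tac.
by apply: tev_ext => p q; rewrite tev_tm //; ml_tac.
Qed.

Let smL' := smL.
Let smR' := smR.
Let scopL' := scopL.
Let sepsL' := sepsL.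
Let sSL' := sSL.

Lemma s_unitl t : sm sone t = t.
Proof.
move: t; apply: tensor_ext; [by lin_tac | exact: lin_id | move=> b g].
rewrite /smash_one sm_tm (hq_cop_one hH) tev_tm; last by ml_tac.
by rewrite (qm_one qm) (hq_unitl hA) (hq_unitl hH).
Qed.

Lemma s_unitr t : sm t sone = t.
Proof.
move: t; apply: tensor_ext; [by lin_tac | exact: lin_id | move=> a h].
rewrite /smash_one sm_tm.
under tev_ext => x y do rewrite (qm_unit qm) (lin_Z _ _ (mulAR a)) (hq_unitr hA) (hq_unitr hH) (lin_Z _ _ (tm_linl _ _)).
by rewrite cuHl //; lin_tac.
Qed.

Lemma scop_ev (W : lmodType K) (F : tT AH -> tT AH -> W) a h : bilin F ->
  tev XX F (scop (tm AH a h)) =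
  tev AA (fun a1 a2 => tev HH (fun h1 h2 => F (tm AH a1 h1) (tm AH a2 h2)) (copH h)) (copA a).
Proof.
case=> F1 F2; rewrite scop_tm tev_tev; try by ml_tac.
apply: tev_ext => a1 a2; rewrite tev_tev; try by ml_tac.
by apply: tev_ext => h1 h2; rewrite tev_tm //; ml_tac.
Qed.

Lemma s_counitl t : tev XX (fun x y => seps x *: y) (scop t) = t.
Proof.
move: t; apply: tensor_ext; [by lin_tac | exact: lin_id | move=> a h].
rewrite scop_ev; last by ml_tac.
under tev_ext => a1 a2 do (under tev_ext => h1 h2 do rewrite seps_tm -scalerA;
   pull (fun z : tT AH => epsA a1 *: z) (fun h1 h2 => epsH h1 *: tm AH a2 h2);
   rewrite cuHl; [|by lin_tac]).
by rewrite (cuAl (g := fun a2 => tm AH a2 h)) //; lin_tac.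
Qed.

Lemma s_counitr t : tev XX (fun x y => seps y *: x) (scop t) = t.
Proof.
move: t; apply: tensor_ext; [by lin_tac | exact: lin_id | move=> a h].
rewrite scop_ev; last by ml_tac.
under tev_ext => a1 a2 do (under tev_ext => h1 h2 do rewrite seps_tm -scalerA;
   pull (fun z : tT AH => epsA a2 *: z) (fun h1 h2 => epsH h2 *: tm AH a1 h1);
   rewrite cuHr; [|by lin_tac]).
by rewrite (cuAr (g := fun a1 => tm AH a1 h)) //; lin_tac.
Qed.

Lemma s_cop_one : scop sone = tm XX sone sone.
Proof.
by rewrite /smash_one scop_tm (hq_cop_one hA) tev_tm ?(hq_cop_one hH) ?tev_tm //; ml_tac.
Qed.

Lemma s_eps_one : seps sone = 1.
Proof. by rewrite /smash_one seps_tm (hq_eps_one hA) (hq_eps_one hH) mulr1. Qed.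

Lemma s_eps_mul s t : seps (sm s t) = seps s * seps t.
Proof.
move: s; apply: (tensor_ext (W := K^o) (F := fun s => seps (sm s t)) (G := fun s => seps s * seps t)).
- by lin_tac.
- by lin_tac.
move=> a h; move: t.
apply: (tensor_ext (W := K^o) (F := fun t => seps (sm (tm AH a h) t)) (G := fun t => seps (tm AH a h) * seps t)).
- by lin_tac.
- by lin_tac.
move=> b g; rewrite sm_tm.
rewrite (tev_comp (L := (seps : tT AH -> K^o))); try by ml_tac.
under tev_ext => x y do rewrite seps_tm (hq_eps_mul hA) (hq_eps_mul hH) (qm_eps qm)
   (mulrCA (epsA a)) mulrACA mulrC.
pull (fun z : K^o => (epsA a * epsA b * epsH g) *: z) (fun x y => (epsH x * epsH y : K^o)).
rewrite (eps_cop hH) !seps_tm /=.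
rewrite /GRing.scale /=. by rewrite [RHS]mulrAC mulrA.
Qed.

Lemma s_coassoc (W : lmodType K) (f : tT AH -> tT AH -> tT AH -> W) : trilin f ->
  forall t,
      tev XX (fun x y => tev XX (fun u v => f u v y) (scop x)) (scop t)
    = tev XX (fun x y => tev XX (fun u v => f x u v) (scop y)) (scop t).
Proof.
case=> f1 f2 f3; apply: tensor_ext; [by lin_tac | by lin_tac | move=> a h].
rewrite !scop_ev; try by ml_tac.
under tev_ext => a1 a2 do (under tev_ext => h1 h2 do (rewrite scop_ev; [|by ml_tac]);
  rewrite tev_swap; [|by ml_tac]; under tev_ext => u v do (rewrite coH; [|by ml_tac])).
under [RHS]tev_ext => a1 a2 do (under tev_ext => h1 h2 do (rewrite scop_ev; [|by ml_tac]);
  rewrite tev_swap; [|by ml_tac]).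
rewrite coA; last by ml_tac.
done.
Qed.

Lemma s_cop_mul s t : scop (sm s t) =
    tev XX (fun x y => tev XX (fun u v => tm XX (sm x u) (sm y v)) (scop t)) (scop s).
Proof.
move: s; apply: tensor_ext; [by lin_tac | by lin_tac | move=> a h].
move: t; apply: tensor_ext; [by lin_tac | by lin_tac | move=> b g].
rewrite sm_tm.
push scop (fun h1 h2 => tm AH (mulA a (act h1 b)) (mulH h2 g)).
under tev_ext => h1 h2 do (rewrite scop_tm (hq_cop_mul hA) (hq_cop_mul hH) (qm_cop qm); ttev;
  under tev_ext => x y do (ttev; ttev; under tev_ext => p q do (ttev; under tev_ext => u v do (ttm; ttm; ttev;
     under tev_ext => x' y' do (ttev; under tev_ext => u' v' do ttm))))).
rewrite [LHS]tev_swap; last by ml_tac.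
under tev_ext => a1 a2 do (under tev_ext => h1 h2 do (rewrite tev_swap; [|by ml_tac]);
   rewrite tev_swap; [|by ml_tac]).
rewrite scop_ev; last by ml_tac.
under [RHS]tev_ext => a1 a2 do (under tev_ext => h1 h2 do (rewrite scop_ev; [|by ml_tac];
   under tev_ext => b1 b2 do (under tev_ext => g1 g2 do (rewrite [sm (tm AH a1 h1) _]sm_tm;
       push (fun z => tm XX z (sm (tm AH a2 h2) (tm AH b2 g2))) (fun p q => tm AH (mulA a1 (act p b1)) (mulH q g1));
       under tev_ext => p q do (rewrite sm_tm;
         push (fun z => tm XX (tm AH (mulA a1 (act p b1)) (mulH q g1)) z) (fun r s => tm AH (mulA a2 (act r b2)) (mulH s g2))))));
   rewrite tev_swap; [|by ml_tac]).
apply: tev_ext => a1 a2; apply: tev_ext => b1 b2.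
under [RHS]tev_ext => x y do (rewrite tev_swap; [|by ml_tac]; under tev_ext => p q do (rewrite tev_swap; [|by ml_tac])).
rewrite -[LHS]c13H; last by ml_tac.
rewrite -[RHS]c13H; last by ml_tac.
rewrite [LHS]c12H; last by ml_tac.
rewrite [RHS]c12H; last by ml_tac.
apply: tev_ext => x y; apply: tev_ext => p m.
by rewrite -(swap_gen (Phi := fun z c => tev HH (fun u' v' => tm XX (tm AH (mulA a1 (act p b1)) (mulH z u'))
         (tm AH (mulA a2 c) (mulH y v'))) (copH g))) //; ml_tac.
Qed.

Lemma qm_mulS y x z :
  tev HH (fun s q => mulA (act (SH q) x) (act (SH s) z)) (copH y) = act (SH y) (mulA x z).
Proof.
rewrite -(qm_mul qm) (cop_S hH) tev_tev; try by ml_tac.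
by apply: tev_ext => p q; rewrite tev_tm //; ml_tac.
Qed.

Lemma sm_sum_l (X : tT AH) (T : tensor H H) (F : H -> H -> tT AH) t : bilin F ->
  sm (tev T F t) X = tev T (fun p q => sm (F p q) X) t.
Proof. move=> BF; rewrite (tev_comp (L := fun z => sm z X)) //; ml_tac. Qed.

Lemma sm_sum_r (X : tT AH) (T : tensor H H) (F : H -> H -> tT AH) t : bilin F ->
  sm X (tev T F t) = tev T (fun p q => sm X (F p q)) t.
Proof. move=> BF; rewrite (tev_comp (L := sm X)) //; ml_tac. Qed.

Lemma s_S1 g h : tev XX (fun x y => sm (sS x) (sm y g)) (scop h) = seps h *: g.
Proof.
move: h; apply: tensor_ext; [by lin_tac | by lin_tac | move=> a h].
move: g; apply: tensor_ext; [by lin_tac | by lin_tac | move=> b g].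
rewrite scop_ev; last by ml_tac.
under tev_ext => a1 a2 do (under tev_ext => h1 h2 do (rewrite sm_tm sS_tm sm_sum_l; [|by ml_tac];
  under tev_ext => p q do (rewrite sm_sum_r; [|by ml_tac]; under tev_ext => k1 k2 do
     (rewrite sm_tm (cop_S hH); ttev; under tev_ext => r s do ttm);
     rewrite tev_swap; [|by ml_tac]);
  rewrite coH; [|by ml_tac];
  under tev_ext => r y do (rewrite tev_swap; [|by ml_tac]; under tev_ext => k1 k2 do
     (pull (fun z => tm AH z (mulH (SH r) (mulH k2 g))) (fun s q => mulA (act (SH q) (SA a1)) (act (SH s) (mulA a2 (act k1 b))));
      rewrite qm_mulS)))).
rewrite tev_swap; last by ml_tac.
under tev_ext => h1 h2 do (rewrite tev_swap; [|by ml_tac]; under tev_ext => r y do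
  (rewrite tev_swap; [|by ml_tac]; under tev_ext => k1 k2 do
    (pull (fun z => tm AH (act (SH y) z) (mulH (SH r) (mulH k2 g))) (fun a1 a2 => mulA (SA a1) (mulA a2 (act k1 b)));
     rewrite (hq_S1 hA) (lin_Z _ _ (actR _)) (lin_Z _ _ (tm_linl _ _)));
   pull (fun z : tT AH => epsA a *: z) (fun k1 k2 => tm AH (act (SH y) (act k1 b)) (mulH (SH r) (mulH k2 g))));
  pull (fun z : tT AH => epsA a *: z) (fun r y => tev HH (fun k1 k2 => tm AH (act (SH y) (act k1 b)) (mulH (SH r) (mulH k2 g))) (copH h2))).
pull (fun z : tT AH => epsA a *: z) (fun h1 h2 => tev HH (fun r y => tev HH (fun k1 k2 => tm AH (act (SH y) (act k1 b)) (mulH (SH r) (mulH k2 g))) (copH h2)) (copH h1)).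
rewrite -c13H; last by ml_tac.
rewrite c12H; last by ml_tac.
under tev_ext => x y do (under tev_ext => p m do
   (pull (fun z => tm AH z (mulH (SH p) (mulH y g))) (fun q r => act (SH q) (act r b));
    rewrite (qm_S2 qm) (lin_Z _ _ (tm_linl _ _)));
   rewrite (cuHr (g := fun p => tm AH b (mulH (SH p) (mulH y g)))); [|by lin_tac]).
pull (tm AH b) (fun x y => mulH (SH x) (mulH y g)).
by rewrite (hq_S1 hH) (lin_Z _ _ (tm_linr _ _)) seps_tm scalerA.
Qed.

Lemma s_S2 g h : tev XX (fun x y => sm x (sm (sS y) g)) (scop h) = seps h *: g.
Proof.
move: h; apply: tensor_ext; [by lin_tac | by lin_tac | move=> a h].
move: g; apply: tensor_ext; [by lin_tac | by lin_tac | move=> b g].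
rewrite scop_ev; last by ml_tac.
under tev_ext => a1 a2 do (under tev_ext => h1 h2 do (rewrite sS_tm sm_sum_l; [|by ml_tac];
  under tev_ext => p q do (rewrite sm_tm (cop_S hH); ttev; under tev_ext => r s do ttm);
  rewrite sm_sum_r; [|by ml_tac];
  under tev_ext => p q do (rewrite sm_sum_r; [|by ml_tac]; under tev_ext => r s do rewrite sm_tm);
  rewrite coH; [|by ml_tac];
  under tev_ext => r y do (rewrite tev_swap; [|by ml_tac]; under tev_ext => k1 k2 do
     (pull (fun z => tm AH (mulA a1 (act k1 z)) (mulH k2 (mulH (SH r) g))) (fun s q => mulA (act (SH q) (SA a2)) (act (SH s) b));
      rewrite qm_mulS)))).
rewrite tev_swap; last by ml_tac.
under tev_ext => h1 h2 do (rewrite tev_swap; [|by ml_tac]; under tev_ext => r y do (rewrite tev_swap; [|by ml_tac])).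
rewrite -c13'H; last by ml_tac.
rewrite c12H; last by ml_tac.
under tev_ext => x y do (under tev_ext => p m do
   (rewrite tev_swap; [|by ml_tac]; under tev_ext => a1 a2 do
     (pull (tm AH (mulA a1 (act p (act (SH y) (mulA (SA a2) b))))) (fun q r => mulH q (mulH (SH r) g));
      rewrite (hq_S2 hH) (lin_Z _ _ (tm_linr _ _)));
    pull (fun z : tT AH => epsH m *: z) (fun a1 a2 => tm AH (mulA a1 (act p (act (SH y) (mulA (SA a2) b)))) g));
   rewrite (cuHr (g := fun p => tev AA (fun a1 a2 => tm AH (mulA a1 (act p (act (SH y) (mulA (SA a2) b)))) g) (copA a))); [|by lin_tac]).
rewrite tev_swap; last by ml_tac.
under tev_ext => a1 a2 do
  (pull (fun z => tm AH (mulA a1 z) g) (fun x y => act x (act (SH y) (mulA (SA a2) b)));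
   rewrite (qm_S1 qm) (lin_Z _ _ (mulAR _)) (lin_Z _ _ (tm_linl _ _))).
pull (fun z : tT AH => epsH h *: z) (fun a1 a2 => tm AH (mulA a1 (mulA (SA a2) b)) g).
pull (fun z => tm AH z g) (fun a1 a2 => mulA a1 (mulA (SA a2) b)).
by rewrite (hq_S2 hA) (lin_Z _ _ (tm_linl _ _)) seps_tm scalerA mulrC.
Qed.

Lemma act_SA h a : act h (SA a) = SA (act h a).
Proof.
pose P := tev HH (fun h' h3 => tev AA (fun a' a3 =>
    tev AA (fun c1 c2 => mulA (SA c1) (mulA c2 (act h3 (SA a3)))) (copA (act h' a'))) (copA a)) (copH h).
transitivity P.
  rewrite /P.
  under tev_ext => h' h3 do (under tev_ext => a' a3 do rewrite (hq_S1 hA) (qm_eps qm) -scalerA;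
    pull (fun z : A => epsH h' *: z) (fun a' a3 => epsA a' *: act h3 (SA a3));
    rewrite (cuAl (g := fun a3 => act h3 (SA a3))); [|by lin_tac]).
  by rewrite (cuHl (g := fun h3 => act h3 (SA a))) //; lin_tac.
rewrite /P.
under tev_ext => h' h3 do (under tev_ext => a' a3 do (rewrite (qm_cop qm); ttev;
   under tev_ext => p q do (ttev; under tev_ext => u v do ttm));
   rewrite tev_swap; [|by ml_tac]; under tev_ext => p q do (rewrite coA; [|by ml_tac])).
rewrite coH; last by ml_tac.
under tev_ext => p m do (rewrite tev_swap; [|by ml_tac]; under tev_ext => u n do
   (rewrite tev_swap; [|by ml_tac]; under tev_ext => v a3 do
      (pull (mulA (SA (act p u))) (fun q h3 => mulA (act q v) (act h3 (SA a3)));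
       rewrite (qm_mul qm));
    pull (fun z => mulA (SA (act p u)) (act m z)) (fun v a3 => mulA v (SA a3));
    rewrite (S_one3 hA) (lin_Z _ _ (actR _)) (qm_unit qm) scalerA (lin_Z _ _ (mulAR _)) (hq_unitr hA) -scalerA);
   rewrite (cuAr (g := fun u => epsH m *: SA (act p u))); [|by lin_tac]).
by rewrite (cuHr (g := fun p => SA (act p a))) //; lin_tac.
Qed.

Lemma S3aux b g a : tev AA (fun a1 a2 => tev HH (fun g1 u => mulA (mulA b (act g1 a1)) (SA (act u a2))) (copH g)) (copA a)
  = epsA (act g a) *: b.
Proof.
rewrite -(hq_S3 hA) (qm_cop qm) tev_tev; try by ml_tac.
under [RHS]tev_ext => p q do (ttev; under tev_ext => u v do ttm).
by rewrite tev_swap //; ml_tac.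
Qed.

Lemma s_S3 g h : tev XX (fun x y => sm (sm g x) (sS y)) (scop h) = seps h *: g.
Proof.
move: h; apply: tensor_ext; [by lin_tac | by lin_tac | move=> a h].
move: g; apply: tensor_ext; [by lin_tac | by lin_tac | move=> b g].
rewrite scop_ev; last by ml_tac.
under tev_ext => a1 a2 do (under tev_ext => h1 h2 do (rewrite sS_tm sm_tm sm_sum_l; [|by ml_tac];
  under tev_ext => g1 g2 do (rewrite sm_sum_r; [|by ml_tac];
     under tev_ext => p q do (rewrite sm_tm (hq_cop_mul hH); ttev; under tev_ext => x y do (ttev;
        under tev_ext => u v do (ttm; rewrite hyp2)));
     rewrite tev_swap; [|by ml_tac]));
  rewrite tev_swap; [|by ml_tac]; under tev_ext => g1 g2 do (rewrite tev_swap; [|by ml_tac])).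
under tev_ext => a1 a2 do (under tev_ext => g1 g2 do (under tev_ext => u v do
   (rewrite -c13'H; [|by ml_tac]; rewrite c12H; [|by ml_tac];
    under tev_ext => x' y' do (under tev_ext => p m do
       (pull (tm AH (mulA (mulA b (act g1 a1)) (act (mulH (mulH u p) (SH y')) (SA a2)))) (fun q r => mulH (mulH v q) (SH r));
        rewrite (hq_S3 hH) (lin_Z _ _ (tm_linr _ _)));
      rewrite (cuHr (g := fun p => tm AH (mulA (mulA b (act g1 a1)) (act (mulH (mulH u p) (SH y')) (SA a2))) v)); [|by lin_tac]);
    pull (fun z => tm AH (mulA (mulA b (act g1 a1)) (act z (SA a2))) v) (fun x' y' => mulH (mulH u x') (SH y'));
    rewrite (hq_S3 hH) (lin_Z _ _ (actL _)) (lin_Z _ _ (mulAR _)) (lin_Z _ _ (tm_linl _ _)));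
   pull (fun z : tT AH => epsH h *: z) (fun u v => tm AH (mulA (mulA b (act g1 a1)) (act u (SA a2))) v));
  pull (fun z : tT AH => epsH h *: z) (fun g1 g2 => tev HH (fun u v => tm AH (mulA (mulA b (act g1 a1)) (act u (SA a2))) v) (copH g2))).
pull (fun z : tT AH => epsH h *: z) (fun a1 a2 => tev HH (fun g1 g2 => tev HH (fun u v => tm AH (mulA (mulA b (act g1 a1)) (act u (SA a2))) v) (copH g2)) (copH g)).
under tev_ext => a1 a2 do (rewrite -coH; [|by ml_tac]).
rewrite tev_swap; last by ml_tac.
under tev_ext => g' y do (under tev_ext => a1 a2 do (under tev_ext => g1 u do rewrite act_SA;
   pull (fun z => tm AH z y) (fun g1 u => mulA (mulA b (act g1 a1)) (SA (act u a2))));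
  pull (fun z => tm AH z y) (fun a1 a2 => tev HH (fun g1 u => mulA (mulA b (act g1 a1)) (SA (act u a2))) (copH g'));
  rewrite S3aux (qm_eps qm) mulrC -scalerA (lin_Z _ _ (tm_linl _ _))).
pull (fun z : tT AH => epsA a *: z) (fun g' y => epsH g' *: tm AH b y);
  last by move=> ??; rewrite (lin_Z _ _ (tm_linl _ _)).
rewrite (cuHl (g := tm AH b)); last by lin_tac.
by rewrite seps_tm !scalerA mulrC.
Qed.

Lemma S4aux b m a : tev HH (fun m1 m2 => tev AA (fun a1 a2 => mulA (mulA b (SA (act m1 a1))) (act m2 a2)) (copA a)) (copH m)
  = epsA (act m a) *: b.
Proof.
rewrite -(hq_S4 hA) (qm_cop qm) tev_tev; try by ml_tac.
by under [RHS]tev_ext => p q do (ttev; under tev_ext => u v do ttm).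
Qed.

Lemma copmulS (W : lmodType K) (Phi : H -> H -> W) g m : bilin Phi ->
  tev HH Phi (copH (mulH g (SH m))) =
  tev HH (fun k1 k2 => tev HH (fun g1 x => Phi (mulH g1 (SH k2)) (mulH x (SH k1))) (copH g)) (copH m).
Proof.
case=> P1 P2; rewrite (hq_cop_mul hH) tev_tev; try by ml_tac.
under tev_ext => g1 x do (rewrite (cop_S hH); ttev; ttev; under tev_ext => k1 k2 do (ttm; ttm)).
by rewrite tev_swap //; ml_tac.
Qed.

Lemma s_S4 g h : tev XX (fun x y => sm (sm g (sS x)) y) (scop h) = seps h *: g.
Proof.
move: h; apply: tensor_ext; [by lin_tac | by lin_tac | move=> a h].
move: g; apply: tensor_ext; [by lin_tac | by lin_tac | move=> b g].
rewrite scop_ev; last by ml_tac.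
under tev_ext => a1 a2 do (under tev_ext => h1 h2 do (rewrite sS_tm sm_sum_r; [|by ml_tac];
  under tev_ext => p q do (rewrite sm_tm; under tev_ext => g1 g2 do rewrite hyp2);
  rewrite sm_sum_l; [|by ml_tac];
  under tev_ext => p q do (rewrite sm_sum_l; [|by ml_tac];
     under tev_ext => g1 g2 do (rewrite sm_tm (hq_cop_mul hH); ttev; under tev_ext => x y do
        (rewrite (cop_S hH); ttev; ttev; under tev_ext => u v do (ttm; ttm)));
     under tev_ext => g1 g2 do (rewrite tev_swap; [|by ml_tac]);
     rewrite tev_swap; [|by ml_tac]; under tev_ext => u v do (rewrite -coH; [|by ml_tac])))).
under tev_ext => a1 a2 do (rewrite c12H; [|by ml_tac]; under tev_ext => x y do (under tev_ext => p q do
   (rewrite tev_swap; [|by ml_tac]))).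
rewrite tev_swap; last by ml_tac.
under tev_ext => x y do (rewrite tev_swap; [|by ml_tac]; under tev_ext => p q do
  (rewrite tev_swap; [|by ml_tac]; under tev_ext => x0 y0 do
    (rewrite tev_swap; [|by ml_tac]; under tev_ext => u v do
      (rewrite tev_swap; [|by ml_tac]; under tev_ext => u0 v0 do
         (pull (fun z => tm AH z (mulH (mulH y0 (SH p)) y)) (fun a1 a2 => mulA (mulA b (act (mulH u0 (SH v)) (SA a1))) (act (mulH v0 (SH u)) a2)));
       pull (fun z => tm AH z (mulH (mulH y0 (SH p)) y)) (fun u0 v0 => tev AA (fun a1 a2 => mulA (mulA b (act (mulH u0 (SH v)) (SA a1))) (act (mulH v0 (SH u)) a2)) (copA a)));
     pull (fun z => tm AH z (mulH (mulH y0 (SH p)) y)) (fun u v => tev HH (fun u0 v0 => tev AA (fun a1 a2 => mulA (mulA b (act (mulH u0 (SH v)) (SA a1))) (act (mulH v0 (SH u)) a2)) (copA a)) (copH x0));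
     rewrite -(copmulS (Phi := fun m1 m2 => tev AA (fun a1 a2 => mulA (mulA b (act m1 (SA a1))) (act m2 a2)) (copA a))); [|by ml_tac];
     under tev_ext => m1 m2 do (under tev_ext => a1 a2 do rewrite act_SA);
     rewrite S4aux (qm_eps qm) (hq_eps_mul hH) (eps_S hH) (lin_Z _ _ (tm_linl _ _))
       (mulrC (epsH x0)) -mulrA -!scalerA);
   pull (fun z : tT AH => epsH q *: z) (fun x0 y0 => epsH x0 *: (epsA a *: tm AH b (mulH (mulH y0 (SH p)) y))));
  rewrite (cuHr (g := fun p => tev HH (fun x0 y0 => epsH x0 *: (epsA a *: tm AH b (mulH (mulH y0 (SH p)) y))) (copH g))); [|by lin_tac];
  rewrite (cuHl (g := fun y0 => epsA a *: tm AH b (mulH (mulH y0 (SH x)) y))); [|by lin_tac]).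
pull (fun z => epsA a *: tm AH b z) (fun x y => mulH (mulH g (SH x)) y).
by rewrite (hq_S4 hH) (lin_Z _ _ (tm_linr _ _)) seps_tm !scalerA.
Qed.

Lemma s_hq : hopf_quasigroup sm sone scop seps sS.
Proof.
constructor.
- by split; [exact: smL | exact: smR].
- exact: s_unitl.
- exact: s_unitr.
- exact: scopL.
- exact: sepsL.
- exact: sSL.
- exact: s_coassoc.
- exact: s_counitl.
- exact: s_counitr.
- exact: s_cop_mul.
- exact: s_cop_one.
- exact: s_eps_mul.
- exact: s_eps_one.
- exact: s_S1.
- exact: s_S2.
- exact: s_S3.
- exact: s_S4.
Qed.



End Main.

Theorem mainTheorem5 (K : fieldType) (H A : lmodType K)
  (HH : tensor H H) (AA : tensor A A) (HA : tensor H A) (AH : tensor A H)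
  (XX : tensor (tT AH) (tT AH))
  (mulH : H -> H -> H) (oneH : H) (copH : H -> tT HH) (epsH : H -> K)
  (SH : H -> H)
  (mulA : A -> A -> A) (oneA : A) (copA : A -> tT AA) (epsA : A -> K)
  (SA : A -> A)
  (act : H -> A -> A) :
  hopf_quasigroup mulH oneH copH epsH SH ->
  hopf_quasigroup mulA oneA copA epsA SA ->
  quasimodule_hopf_quasigroup oneH copH epsH SH mulA oneA copA epsA act ->
  (forall (h : H) (a : A),
     tev HH (fun x y => tm HA x (act y a)) (copH h)
     = tev HH (fun x y => tm HA y (act x a)) (copH h)) ->
  (forall (g h : H) (a : A), act g (act (SH h) a) = act (mulH g (SH h)) a) ->
  let R := @Rmap K H A HH HA AH copH act in
  [/\ @R_coalgebra_map K H A HH AA HA AH copH epsH copA epsA R,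
      @R_left_multiplicative K H A HA AH mulA R,
      @R_normal K H A HA AH oneH oneA R,
      @R_left_conormal K H A HA AH epsA R &
      @R_right_S_multiplicative K H A HA AH mulH SH R]
  /\ @R_right_S_conormal K H A HA AH epsH SH R
  /\ hopf_quasigroup (@smash_mul K H A HH AH mulH copH mulA act)
       (@smash_one K H A AH oneH oneA)
       (@smash_cop K H A HH AA AH copH copA XX)
       (@smash_eps K H A AH epsH epsA)
       (@smash_S K H A HH HA AH copH SH SA act).
Proof.
move=> hH hA qm sw h2 R.
split; [split|split].
- by eapply P_coalg; eassumption.
- by eapply P_leftmult; eassumption.
- by eapply P_normal; eassumption.
- by eapply P_conormal; eassumption.
- by eapply P_Smult; eassumption.
- by eapply P_Sconormal; eassumption.
- by eapply s_hq; eassumption.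
Qed.
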